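(* Let $H\ge1$, and for $h=1,\dots,H$ let $\boldsymbol{P}^h\in\mathbb{R}^{n\times n}$, $\boldsymbol{A}^h=\mathrm{softmax}(\boldsymbol{P}^h)$, and $\boldsymbol{W}_V^h,\boldsymbol{W}_O^h\in\mathbb{R}^{d\times d}$. Let $\alpha=\max_h\max_{i,j}\lvert\boldsymbol{P}^h_{ij}\rvert$, $\sigma_1=\max_h\lVert\boldsymbol{W}_V^h\rVert_2$, $\sigma_2=\max_h\lVert\boldsymbol{W}_O^h\rVert_2$. For $\boldsymbol{X}\in\mathbb{R}^{n\times d}$ define $\mathrm{MSA}(\boldsymbol{X})=\sum_{h=1}^H\boldsymbol{A}^h\boldsymbol{X}\boldsymbol{W}_V^h\boldsymbol{W}_O^h$. Then $$\lVert\mathrm{HC}[\mathrm{MSA}(\boldsymbol{X})]\rVert_F\le\sigma_1\sigma_2H\sqrt{\frac{ne^{2\alpha}}{e^{2\alpha}+n-1}}\;\lVert\mathrm{HC}[\boldsymbol{X}]\rVert_F.$$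
   Context: $\mathrm{softmax}$ is applied row-wise: $\mathrm{softmax}(\boldsymbol{P})_{ij}=e^{\boldsymbol{P}_{ij}}/\sum_t e^{\boldsymbol{P}_{it}}$. For $\boldsymbol{X}\in\mathbb{R}^{n\times d}$, $\mathrm{HC}[\boldsymbol{X}]=(\boldsymbol{I}-\frac1n\boldsymbol{1}\boldsymbol{1}^T)\boldsymbol{X}$ with $\boldsymbol{1}$ the all-ones vector. $\lVert\cdot\rVert_F$ is the Frobenius norm, $\lVert\cdot\rVert_2$ the spectral norm. *)

(* Defs.v *)
From HB Require Import structures.
From mathcomp Require Import all_boot all_order all_algebra.
From mathcomp Require Import all_classical all_reals all_analysis.
Set Implicit Arguments. Unset Strict Implicit. Unset Printing Implicit Defensive.
Import Order.TTheory GRing.Theory Num.Theory.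
Local Open Scope ring_scope.
Local Open Scope classical_set_scope.

Definition softmax (R : realType) (n : nat) (P : 'M[R]_n) : 'M[R]_n :=
  \matrix_(i, j) (expR (P i j) / \sum_(t < n) expR (P i t)).

Definition HC (R : realType) (n d : nat) (X : 'M[R]_(n, d)) : 'M[R]_(n, d) :=
  (1%:M - n%:R^-1 *: const_mx 1) *m X.

Definition frob (R : realType) (m n : nat) (A : 'M[R]_(m, n)) : R :=
  Num.sqrt (\sum_(i < m) \sum_(j < n) (A i j) ^+ 2).

Definition vnorm2 (R : realType) (m : nat) (v : 'cV[R]_m) : R :=
  Num.sqrt (\sum_(i < m) (v i 0) ^+ 2).

Definition specnorm (R : realType) (m n : nat) (A : 'M[R]_(m, n)) : R :=
  sup [set vnorm2 (A *m v) | v in [set v : 'cV[R]_n | vnorm2 v <= 1]].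

Definition MSA (R : realType) (n d H : nat) (P : 'I_H -> 'M[R]_n)
  (WV WO : 'I_H -> 'M[R]_d) (X : 'M[R]_(n, d)) : 'M[R]_(n, d) :=
  \sum_(h < H) (softmax (P h) *m X *m WV h *m WO h).

(* Main.v *)
Require Import Defs.
From HB Require Import structures.
From mathcomp Require Import all_boot all_order all_algebra.
From mathcomp Require Import all_classical all_reals all_analysis.
From mathcomp Require Import ring lra.
Set Implicit Arguments. Unset Strict Implicit.
Import Order.TTheory GRing.Theory Num.Theory.
Local Open Scope ring_scope.

Lemma sumsq_ge0 (R : realType) (I : finType) (a : I -> R) : 0 <= \sum_i a i ^+ 2.
Proof. by apply: sumr_ge0 => i _; rewrite sqr_ge0. Qed.

Lemma sumsq_eq0 (R : realType) (I : finType) (a : I -> R) :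
  \sum_i a i ^+ 2 = 0 -> forall i, a i = 0.
Proof.
move=> h i; have /psumr_eq0P h2 := h.
by apply/eqP; rewrite -sqrf_eq0; apply/eqP; apply: h2 => // j _; rewrite sqr_ge0.
Qed.

Lemma CS (R : realType) (I : finType) (a b : I -> R) :
  \sum_i a i * b i <= Num.sqrt (\sum_i a i ^+ 2) * Num.sqrt (\sum_i b i ^+ 2).
Proof.
set Sa := \sum_i a i ^+ 2; set Sb := \sum_i b i ^+ 2; set Sab := \sum_i a i * b i.
have Sa0 : 0 <= Sa by apply: sumsq_ge0.
have Sb0 : 0 <= Sb by apply: sumsq_ge0.
set s := Num.sqrt Sa; set t := Num.sqrt Sb.
have s2 : s ^+ 2 = Sa by rewrite sqr_sqrtr.
have t2 : t ^+ 2 = Sb by rewrite sqr_sqrtr.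
have s0 : 0 <= s by rewrite sqrtr_ge0.
have t0 : 0 <= t by rewrite sqrtr_ge0.
have E : \sum_i (t * a i - s * b i) ^+ 2 = t ^+ 2 * Sa + s ^+ 2 * Sb - 2 * t * s * Sab.
  rewrite /Sa /Sb /Sab !mulr_sumr -big_split /= -sumrB; apply: eq_bigr => i _; ring.
have key : 0 <= t ^+ 2 * Sa + s ^+ 2 * Sb - 2 * t * s * Sab by rewrite -E sumsq_ge0.
have [st0|st0] := eqVneq (s * t) 0.
  have Sab0 : Sab = 0.
    move/eqP: st0; rewrite mulf_eq0 => /orP[] /eqP.
      move=> /eqP; rewrite sqrtr_eq0 => h; have Sa00 : Sa = 0 by apply/le_anti; rewrite h Sa0.
      by rewrite /Sab big1 // => i _; rewrite (sumsq_eq0 Sa00) mul0r.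
    move=> /eqP; rewrite sqrtr_eq0 => h; have Sb00 : Sb = 0 by apply/le_anti; rewrite h Sb0.
    by rewrite /Sab big1 // => i _; rewrite (sumsq_eq0 Sb00) mulr0.
  by rewrite Sab0 st0.
have stp : 0 < s * t by rewrite lt_def st0 mulr_ge0.
rewrite -s2 -t2 in key; nra.
Qed.

Lemma CS2 (R : realType) (I : finType) (a b : I -> R) :
  (\sum_i a i * b i) ^+ 2 <= (\sum_i a i ^+ 2) * (\sum_i b i ^+ 2).
Proof.
have h1 := CS a b.
have h2 := CS (fun i => - a i) b.
have e1 : \sum_i - a i * b i = - \sum_i a i * b i.
  by rewrite -sumrN; apply: eq_bigr => i _; rewrite mulNr.
have e2 : \sum_i (- a i) ^+ 2 = \sum_i a i ^+ 2.
  by apply: eq_bigr => i _; rewrite sqrrN.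
rewrite e1 e2 in h2.
have -> : (\sum_i a i ^+ 2) * (\sum_i b i ^+ 2) =
  (Num.sqrt (\sum_i a i ^+ 2) * Num.sqrt (\sum_i b i ^+ 2)) ^+ 2.
  by rewrite exprMn !sqr_sqrtr // sumsq_ge0.
set p := _ * _ in h1 h2 *; set x := \sum_i _ in h1 h2 *.
nra.
Qed.

Lemma sqrt_le_sq (R : realType) (x y : R) : 0 <= y -> x <= y ^+ 2 -> Num.sqrt x <= y.
Proof.
move=> y0 h; rewrite -(ger0_norm y0) -sqrtr_sqr ler_sqrt //.
by rewrite sqr_ge0.
Qed.

Lemma sqrt_le_mul (R : realType) (c x y : R) :
  0 <= c -> 0 <= y -> x <= c ^+ 2 * y -> Num.sqrt x <= c * Num.sqrt y.
Proof.
move=> c0 y0 h; apply: sqrt_le_sq; first by rewrite mulr_ge0 // sqrtr_ge0.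
by rewrite exprMn sqr_sqrtr.
Qed.

Definition fs (R : realType) (m n : nat) (A : 'M[R]_(m, n)) : R :=
  \sum_(i < m) \sum_(j < n) (A i j) ^+ 2.

Lemma fs_ge0 (R : realType) (m n : nat) (A : 'M[R]_(m, n)) : 0 <= fs A.
Proof. by apply: sumr_ge0 => i _; apply: sumsq_ge0. Qed.

Lemma frob_ge0 (R : realType) (m n : nat) (A : 'M[R]_(m, n)) : 0 <= frob A.
Proof. by rewrite /frob sqrtr_ge0. Qed.

Lemma frob_sq (R : realType) (m n : nat) (A : 'M[R]_(m, n)) : frob A ^+ 2 = fs A.
Proof. by rewrite /frob sqr_sqrtr // fs_ge0. Qed.

Lemma frob_add (R : realType) (m n : nat) (A B : 'M[R]_(m, n)) :
  frob (A + B) <= frob A + frob B.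
Proof.
have cs : \sum_(i < m) \sum_(j < n) A i j * B i j <= frob A * frob B.
  have := CS (fun p : 'I_m * 'I_n => A p.1 p.2) (fun p => B p.1 p.2).
  by rewrite /frob /fs !pair_big.
apply: sqrt_le_sq; first by rewrite addr_ge0 // frob_ge0.
have -> : \sum_(i < m) \sum_(j < n) (A + B) i j ^+ 2 =
   fs A + fs B + 2 * \sum_(i < m) \sum_(j < n) A i j * B i j.
  rewrite /fs mulr_sumr -!big_split /=; apply: eq_bigr => i _.
  rewrite mulr_sumr -!big_split /=; apply: eq_bigr => j _; rewrite mxE; ring.
rewrite -!frob_sq; nra.
Qed.

Lemma frob0 (R : realType) (m n : nat) : frob (0 : 'M[R]_(m, n)) = 0.
Proof.
rewrite /frob big1 ?sqrtr0 // => i _; rewrite big1 // => j _; by rewrite mxE expr0n.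
Qed.

Lemma frob_sum (R : realType) (m n H : nat) (Z : 'I_H -> 'M[R]_(m, n)) :
  frob (\sum_(h < H) Z h) <= \sum_(h < H) frob (Z h).
Proof.
apply: (big_ind2 (fun x y => frob x <= y)); first by rewrite frob0.
  move=> x1 x2 y1 y2 h1 h2; apply: le_trans (frob_add _ _) _; exact: lerD.
by [].
Qed.

Lemma vnorm2_ge0 (R : realType) (m : nat) (v : 'cV[R]_m) : 0 <= vnorm2 v.
Proof. by rewrite /vnorm2 sqrtr_ge0. Qed.

Lemma vnorm2_sq (R : realType) (m : nat) (v : 'cV[R]_m) :
  vnorm2 v ^+ 2 = \sum_i (v i 0) ^+ 2.
Proof. by rewrite /vnorm2 sqr_sqrtr // sumsq_ge0. Qed.

Lemma vnorm2Z (R : realType) (m : nat) (c : R) (v : 'cV[R]_m) :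
  vnorm2 (c *: v) = `|c| * vnorm2 v.
Proof.
rewrite /vnorm2 -sqrtr_sqr -sqrtrM ?sqr_ge0 // mulr_sumr; congr Num.sqrt.
by apply: eq_bigr => i _; rewrite mxE exprMn.
Qed.

Lemma vnorm2_frob (R : realType) (m n : nat) (W : 'M[R]_(m, n)) (v : 'cV[R]_n) :
  vnorm2 (W *m v) <= frob W * vnorm2 v.
Proof.
rewrite /vnorm2 /frob -sqrtrM ?fs_ge0 // ler_sqrt; last first.
  by rewrite mulr_ge0 ?sumsq_ge0 // -/(fs W) fs_ge0.
rewrite mulr_suml; apply: ler_sum => i _; rewrite mxE.
exact: (CS2 (fun j => W i j) (fun j => v j 0)).
Qed.

Definition snset (R : realType) (m n : nat) (W : 'M[R]_(m, n)) : set R :=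
  [set vnorm2 (W *m v) | v in [set v : 'cV[R]_n | vnorm2 v <= 1]].

Lemma snset_sup (R : realType) (m n : nat) (W : 'M[R]_(m, n)) : has_sup (snset W).
Proof.
split.
  exists 0, 0; first by rewrite /= /vnorm2 big1 ?sqrtr0 // => i _; rewrite mxE expr0n.
  by rewrite mulmx0 /vnorm2 big1 ?sqrtr0 // => i _; rewrite mxE expr0n.
exists (frob W) => x [v /= hv <-].
apply: le_trans (vnorm2_frob W v) _.
by rewrite -[leRHS]mulr1 ler_wpM2l // frob_ge0.
Qed.

Lemma specnorm_ge0 (R : realType) (m n : nat) (W : 'M[R]_(m, n)) : 0 <= specnorm W.
Proof.
apply: (sup_upper_bound (snset_sup W)); exists 0.
  by rewrite /= /vnorm2 big1 ?sqrtr0 // => i _; rewrite mxE expr0n.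
by rewrite mulmx0 /vnorm2 big1 ?sqrtr0 // => i _; rewrite mxE expr0n.
Qed.

Lemma specnorm_bound (R : realType) (m n : nat) (W : 'M[R]_(m, n)) (v : 'cV[R]_n) :
  vnorm2 (W *m v) <= specnorm W * vnorm2 v.
Proof.
have [r0|r0] := eqVneq (vnorm2 v) 0.
  by apply: le_trans (vnorm2_frob W v) _; rewrite r0 !mulr0.
have rp : 0 < vnorm2 v by rewrite lt_def r0 vnorm2_ge0.
have h : (vnorm2 v)^-1 * vnorm2 (W *m v) <= specnorm W.
  apply: (sup_upper_bound (snset_sup W)); exists ((vnorm2 v)^-1 *: v).
    by rewrite /= vnorm2Z ger0_norm ?invr_ge0 ?vnorm2_ge0 // mulVf.
  by rewrite -scalemxAr vnorm2Z ger0_norm // invr_ge0 vnorm2_ge0.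
by rewrite -ler_pdivrMr // mulrC.
Qed.

Lemma specnorm_tr (R : realType) (m n : nat) (W : 'M[R]_(m, n)) (u : 'cV[R]_m) :
  vnorm2 (W^T *m u) <= specnorm W * vnorm2 u.
Proof.
set w := W^T *m u.
have e : vnorm2 w ^+ 2 = \sum_i u i 0 * (W *m w) i 0.
  rewrite vnorm2_sq.
  transitivity (\sum_j \sum_i u i 0 * W i j * w j 0).
    apply: eq_bigr => j _; rewrite expr2 {1}/w mxE mulr_suml.
    by apply: eq_bigr => i _; rewrite !mxE (mulrC (W i j)).
  rewrite exchange_big /=; apply: eq_bigr => i _; rewrite mxE mulr_sumr.
  by apply: eq_bigr => j _; rewrite mulrA.
have h1 : vnorm2 w ^+ 2 <= vnorm2 u * vnorm2 (W *m w).
  by rewrite e; exact: (CS (fun i => u i 0) (fun i => (W *m w) i 0)).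
have h2 := specnorm_bound W w.
have h3 := vnorm2_ge0 u.
have h4 := vnorm2_ge0 w.
have h5 := specnorm_ge0 W.
have h6 : vnorm2 w ^+ 2 <= vnorm2 u * (specnorm W * vnorm2 w).
  by apply: le_trans h1 _; rewrite ler_wpM2l.
have [y0|y0] := eqVneq (vnorm2 w) 0.
  by rewrite y0 mulr_ge0.
have yp : 0 < vnorm2 w by rewrite lt_def y0 h4.
rewrite -(ler_pM2r yp) -expr2; apply: (le_trans h6).
by rewrite mulrA (mulrC (vnorm2 u)).
Qed.

Lemma frob_mulr (R : realType) (m n p : nat) (Y : 'M[R]_(m, n)) (W : 'M[R]_(n, p)) :
  frob (Y *m W) <= specnorm W * frob Y.
Proof.
apply: sqrt_le_mul; [exact: specnorm_ge0 | exact: fs_ge0 |].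
rewrite /fs mulr_sumr; apply: ler_sum => i _.
set u : 'cV[R]_n := (row i Y)^T.
have e1 : \sum_(j < p) (Y *m W) i j ^+ 2 = vnorm2 (W^T *m u) ^+ 2.
  rewrite vnorm2_sq; apply: eq_bigr => j _; rewrite !mxE; congr (_ ^+ 2).
  by apply: eq_bigr => k _; rewrite !mxE mulrC.
have e2 : \sum_(j < n) Y i j ^+ 2 = vnorm2 u ^+ 2.
  by rewrite vnorm2_sq; apply: eq_bigr => j _; rewrite !mxE.
rewrite e1 e2 -exprMn.
have h := specnorm_tr W u.
have h0 := vnorm2_ge0 (W^T *m u).
by rewrite ler_pXn2r // ?nnegrE // mulr_ge0 ?specnorm_ge0 ?vnorm2_ge0.
Qed.

Lemma jensen (R : realType) (I : finType) (a y : I -> R) :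
  (forall i, 0 <= a i) -> \sum_i a i = 1 ->
  (\sum_i a i * y i) ^+ 2 <= \sum_i a i * y i ^+ 2.
Proof.
move=> a0 a1.
have := CS2 (fun i => Num.sqrt (a i)) (fun i => Num.sqrt (a i) * y i).
have e1 : \sum_i Num.sqrt (a i) * (Num.sqrt (a i) * y i) = \sum_i a i * y i.
  by apply: eq_bigr => i _; rewrite mulrA -expr2 sqr_sqrtr.
have e2 : \sum_i Num.sqrt (a i) ^+ 2 = 1.
  by rewrite -a1; apply: eq_bigr => i _; rewrite sqr_sqrtr.
have e3 : \sum_i (Num.sqrt (a i) * y i) ^+ 2 = \sum_i a i * y i ^+ 2.
  by apply: eq_bigr => i _; rewrite exprMn sqr_sqrtr.
by rewrite e1 e2 e3 mul1r.
Qed.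

Lemma frob_stoch (R : realType) (n d : nat) (A : 'M[R]_n) (Y : 'M[R]_(n, d)) (c : R) :
  (forall i j, 0 <= A i j) -> (forall i, \sum_j A i j = 1) ->
  (forall j, \sum_i A i j <= c) -> 0 <= c ->
  frob (A *m Y) <= Num.sqrt c * frob Y.
Proof.
move=> A0 A1 Ac c0.
apply: sqrt_le_mul; [exact: sqrtr_ge0 | exact: fs_ge0 |].
rewrite sqr_sqrtr //.
apply: (@le_trans _ _ (\sum_(i < n) \sum_(j < d) \sum_(k < n) A i k * Y k j ^+ 2)).
  apply: ler_sum => i _; apply: ler_sum => j _; rewrite mxE.
  exact: (jensen (fun k => Y k j) (A0 i) (A1 i)).
have -> : \sum_(i < n) \sum_(j < d) \sum_(k < n) A i k * Y k j ^+ 2 =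
          \sum_(k < n) \sum_(j < d) (\sum_(i < n) A i k) * Y k j ^+ 2.
  transitivity (\sum_(i < n) \sum_(k < n) \sum_(j < d) A i k * Y k j ^+ 2).
    by apply: eq_bigr => i _; rewrite exchange_big.
  rewrite exchange_big /=; apply: eq_bigr => k _; rewrite exchange_big /=.
  by apply: eq_bigr => j _; rewrite mulr_suml.
rewrite /fs mulr_sumr; apply: ler_sum => k _; rewrite mulr_sumr; apply: ler_sum => j _.
by rewrite ler_wpM2r ?sqr_ge0.
Qed.

Lemma HC_entry (R : realType) (n d : nat) (Z : 'M[R]_(n, d)) i j :
  HC Z i j = Z i j - n%:R^-1 * \sum_k Z k j.
Proof.
rewrite /HC mulmxBl mul1mx -scalemxAl !mxE; congr (_ - _ * _).
by apply: eq_bigr => k _; rewrite mxE mul1r.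
Qed.

Lemma col_center (R : realType) (n : nat) (z : 'I_n -> R) : (0 < n)%N ->
  \sum_i (z i - n%:R^-1 * \sum_k z k) ^+ 2 <= \sum_i z i ^+ 2.
Proof.
move=> n0; set S := \sum_k z k; set mu := n%:R^-1 * S.
have hS : n%:R * mu = S by rewrite /mu mulrA divff ?mul1r // pnatr_eq0 -lt0n.
rewrite (eq_bigr (fun i => (z i ^+ 2 - 2 * mu * z i) + mu ^+ 2)); last by move=> i _; ring.
rewrite big_split sumrB /= -mulr_sumr sumr_const card_ord -mulr_natl -/S -hS.
have : 0 <= n%:R * mu ^+ 2 :> R by rewrite mulr_ge0 ?sqr_ge0.
lra.
Qed.

Lemma frob_HC (R : realType) (n d : nat) (Z : 'M[R]_(n, d)) : (0 < n)%N ->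
  frob (HC Z) <= frob Z.
Proof.
move=> n0; rewrite /frob ler_sqrt ?fs_ge0 //.
rewrite exchange_big [leRHS]exchange_big /=; apply: ler_sum => j _.
under eq_bigr do rewrite HC_entry.
exact: (col_center (fun i => Z i j)).
Qed.

Lemma HC_absorb (R : realType) (n d : nat) (A : 'M[R]_n) (X : 'M[R]_(n, d)) :
  (0 < n)%N -> (forall i, \sum_j A i j = 1) ->
  HC (A *m X) = HC (A *m HC X).
Proof.
move=> n0 A1.
set J := (const_mx 1 : 'M[R]_n).
have AJ : A *m J = J.
  apply/matrixP => i j; rewrite !mxE -[RHS](A1 i).
  by apply: eq_bigr => k _; rewrite mxE mulr1.
have JJ : J *m J = n%:R *: J.
  apply/matrixP => i j; rewrite !mxE (eq_bigr (fun _ => 1)) ?sumr_const ?card_ord ?mulr1 //.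
  by move=> k _; rewrite !mxE mulr1.
have KJ : (1%:M - n%:R^-1 *: J) *m J = 0.
  rewrite mulmxBl mul1mx -scalemxAl JJ scalerA mulVf ?scale1r ?subrr //.
  by rewrite pnatr_eq0 -lt0n.
rewrite /HC -/J [in RHS](mulmxA A) mulmxBr mulmx1 -scalemxAr AJ.
have -> : (A - n%:R^-1 *: J) *m X = A *m X - n%:R^-1 *: (J *m X) by rewrite mulmxBl -scalemxAl.
by rewrite mulmxBr -scalemxAr (mulmxA _ J X) KJ mul0mx scaler0 subr0.
Qed.

Lemma sm_den_gt0 (R : realType) (n : nat) (P : 'M[R]_n) i :
  0 < \sum_(t < n) expR (P i t).
Proof.
rewrite (bigD1 i) //=; apply: lt_le_trans (expR_gt0 (P i i)) _.
by rewrite lerDl sumr_ge0 // => t _; rewrite expR_ge0.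
Qed.

Lemma sm_ge0 (R : realType) (n : nat) (P : 'M[R]_n) i j : 0 <= softmax P i j.
Proof. by rewrite mxE divr_ge0 ?expR_ge0 // ltW // sm_den_gt0. Qed.

Lemma sm_row (R : realType) (n : nat) (P : 'M[R]_n) i : \sum_j softmax P i j = 1.
Proof.
under eq_bigr do rewrite mxE.
by rewrite -mulr_suml divff // gt_eqF // sm_den_gt0.
Qed.

Lemma sm_le (R : realType) (n : nat) (P : 'M[R]_n) (a : R) i j :
  (forall i j, `|P i j| <= a) ->
  softmax P i j <= expR (2 * a) / (expR (2 * a) + n%:R - 1).
Proof.
move=> Pa; rewrite mxE.
set E := expR (2 * a); set S := \sum_(t < n) expR (P i t); set x := expR (P i j).
have Sp : 0 < S by apply: sm_den_gt0.
have n1 : (0 < n)%N := leq_ltn_trans (leq0n i) (ltn_ord i).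
have Ep : 0 < E by apply: expR_gt0.
have Dp : 0 < E + n%:R - 1.
  have : 1 <= n%:R :> R by rewrite ler1n.
  lra.
have key : forall t, x <= E * expR (P i t).
  move=> t; rewrite /E -expRD ler_expR.
  have := Pa i j; have := Pa i t; rewrite !ler_norml => /andP[h1 h2] /andP[h3 h4].
  lra.
have hsum : \sum_t (E * expR (P i t) - x) = E * S - n%:R * x.
  by rewrite sumrB -mulr_sumr sumr_const card_ord mulr_natl.
have hge : E * x - x <= \sum_t (E * expR (P i t) - x).
  rewrite (bigD1 j) //= lerDl sumr_ge0 // => t _.
  by rewrite subr_ge0 key.
rewrite hsum in hge.
rewrite ler_pdivrMr // mulrAC ler_pdivlMr //.
nra.
Qed.

Theorem proposition4 (R : realType) (n d H : nat) (hH : (1 <= H)%N)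
  (P : 'I_H -> 'M[R]_n) (WV WO : 'I_H -> 'M[R]_d) (X : 'M[R]_(n, d)) :
  let alpha := \big[Num.max/0]_(h < H) \big[Num.max/0]_(i < n)
                 \big[Num.max/0]_(j < n) `|P h i j| in
  let sigma1 := \big[Num.max/0]_(h < H) specnorm (WV h) in
  let sigma2 := \big[Num.max/0]_(h < H) specnorm (WO h) in
  frob (HC (MSA P WV WO X)) <=
    sigma1 * sigma2 * H%:R *
    Num.sqrt (n%:R * expR (2 * alpha) / (expR (2 * alpha) + n%:R - 1)) *
    frob (HC X).
Proof.
cbv zeta.
set alpha := \big[Num.max/0]_(h < H) _.
set sigma1 := \big[Num.max/0]_(h < H) specnorm (WV h).
set sigma2 := \big[Num.max/0]_(h < H) specnorm (WO h).
case: (posnP n) => [n0|n0].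
  subst n; rewrite /frob !big_ord0 sqrtr0 mulr0; exact: lexx.
have Pa : forall h i j, `|P h i j| <= alpha.
  move=> h i j.
  apply: le_trans (le_bigmax 0 (fun j => `|P h i j|) j) _.
  apply: le_trans (le_bigmax 0 (fun i => \big[Num.max/0]_(j < n) `|P h i j|) i) _.
  exact: (le_bigmax 0 (fun h => \big[Num.max/0]_(i < n) \big[Num.max/0]_(j < n) `|P h i j|) h).
have s1 : forall h, specnorm (WV h) <= sigma1 by move=> h; exact: le_bigmax.
have s2 : forall h, specnorm (WO h) <= sigma2 by move=> h; exact: le_bigmax.
set E := expR (2 * alpha).
set c0 := n%:R * E / (E + n%:R - 1).
have Dp : 0 < E + n%:R - 1.
  have : 1 <= n%:R :> R by rewrite ler1n.
  have : 0 < E by apply: expR_gt0.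
  lra.
have c00 : 0 <= c0 by rewrite /c0 divr_ge0 ?mulr_ge0 ?expR_ge0 // ltW.
set c := Num.sqrt c0.
set f := frob (HC X).
have f0 : 0 <= f by apply: frob_ge0.
have c_ge0 : 0 <= c by apply: sqrtr_ge0.
have perhead : forall h,
    frob (HC (softmax (P h) *m X *m WV h *m WO h)) <= sigma2 * (sigma1 * (c * f)).
  move=> h; set A := softmax (P h).
  have -> : HC (A *m X *m WV h *m WO h) = HC (A *m X) *m WV h *m WO h.
    by rewrite /HC !mulmxA.
  have hF : frob (HC (A *m X)) <= c * f.
    rewrite HC_absorb //; last by move=> i; apply: sm_row.
    apply: le_trans (frob_HC _ n0) _.
    apply: frob_stoch => //.
    - by move=> i j; apply: sm_ge0.
    - by move=> i; apply: sm_row.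
    move=> k.
    apply: le_trans (@ler_sum _ _ _ _ _ (fun _ => E / (E + n%:R - 1)) _) _.
      by move=> i _; apply: sm_le; apply: Pa.
    by rewrite sumr_const card_ord /c0 -mulrA mulr_natl.
  apply: le_trans (frob_mulr _ _) _.
  apply: ler_pM; [exact: specnorm_ge0 | | exact: s2 |].
    exact: frob_ge0.
  apply: le_trans (frob_mulr _ _) _.
  apply: ler_pM; [exact: specnorm_ge0 | exact: frob_ge0 | exact: s1 | exact: hF].
have -> : HC (MSA P WV WO X) = \sum_(h < H) HC (softmax (P h) *m X *m WV h *m WO h).
  by rewrite /HC /MSA mulmx_sumr.
apply: le_trans (frob_sum _) _.
apply: le_trans (ler_sum _ (fun h _ => perhead h)) _.
rewrite sumr_const card_ord.
rewrite -[X in X <= _]mulr_natl le_eqVlt; apply/orP; left; apply/eqP; ring.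
Qed.
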